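(* Let $X$ be a finite set. Define $\Phi:\mathbf{Net}(X)\to\mathbf{Cliqgm}(X)$ by letting $\Phi(N_X)(t)$ be the set of maximal cliques of the graph $G_t=(V_t,E_t)$ with $V_t=\{x\in X\mid N_X(x,x)\leq t\}$ and $E_t=\{\{x,x'\}\subset X\mid x\neq x',\ N_X(x,x')\leq t\}$ (equivalently, $\Phi(N_X)(t)$ is the join in $\mathbf{Cliq}(X)$ of the clique-sets $\{\{x,x'\}\}$ over all $x,x'\in X$ with $N_X(x,x')\leq t$). Define $\Psi:\mathbf{Cliqgm}(X)\to\mathbf{Net}(X)$ by $$\Psi(C_X)(x,x'):=\min\{t\in\mathbb{R}\mid x,x'\text{ belong to some clique in }C_X(t)\}.$$ Then $\Phi$ and $\Psi$ are well defined, mutually inverse bijections, and they are isomorphisms of posets: for $N_X,N'_X\in\mathbf{Net}(X)$, $N_X\geq N'_X$ entrywise if and only if $\Phi(N_X)(t)\leq\Phi(N'_X)(t)$ for all $t\in\mathbb{R}$.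
   Context: A phylogenetic network over a finite set $X$ is a map $N_X:X\times X\to\mathbb{R}$ with $N_X(x,x')=N_X(x',x)$ and $\max\{N_X(x,x),N_X(x',x')\}\leq N_X(x,x')$ for all $x,x'\in X$; $\mathbf{Net}(X)$ is the set of these, ordered by $N_X\leq N'_X$ iff $N_X\geq N'_X$ entrywise. A clique-set of $X$ is a set $\mathcal{C}$ of nonempty subsets of $X$ (cliques) such that (i) no member of $\mathcal{C}$ is contained in another member, and (ii) for every nonempty $Y\subset X$, if every pair $y,y'\in Y$ (possibly $y=y'$) is contained in some member of $\mathcal{C}$, then $Y$ is contained in some member of $\mathcal{C}$. $\mathbf{Cliq}(X)$ is the set of clique-sets, ordered by $\mathcal{C}\leq\mathcal{C}'$ iff every member of $\mathcal{C}$ is contained in some member of $\mathcal{C}'$; the join of clique-sets is the set of maximal cliques of the union of their associated graphs (vertices = union of members, edges = pairs of distinct elements lying in a common member). A cliquegram over $X$ is a map $C_X:\mathbb{R}\to\mathbf{Cliq}(X)$ such that (1) $C_X(t)\leq C_X(s)$ for $t\leq s$; (2) there are $t_0,t_1\in\mathbb{R}$ with $C_X(t)=\{X\}$ for $t\geq t_0$ and $C_X(t)=\emptyset$ for $t\leq t_1$; (3) there are real numbers $a_1<\dots<a_n$ with $C_X$ constant on $(-\infty,a_1)$, on each $[a_i,a_{i+1})$ and on $[a_n,\infty)$. $\mathbf{Cliqgm}(X)$ is the set of cliquegrams ordered pointwise. The maximal cliques of a graph are the inclusion-maximal vertex subsets that are pairwise adjacent. *)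

(* Defs.v *)
From HB Require Import structures.
From mathcomp Require Import all_boot all_order all_algebra.
From mathcomp Require Import boolp classical_sets reals.
Set Implicit Arguments. Unset Strict Implicit. Unset Printing Implicit Defensive.
Import Order.TTheory GRing.Theory Num.Theory.
Local Open Scope ring_scope.

Section Defs.
Variables (R : realType) (X : finType).

Definition is_network (N : X -> X -> R) : Prop :=
  forall x x', N x x' = N x' x /\ Num.max (N x x) (N x' x') <= N x x'.

Definition is_cliqueset (C : {set {set X}}) : Prop :=
  [/\ (forall A, A \in C -> A != @finset.set0 X),
      (forall A B, A \in C -> B \in C -> A \subset B -> A = B) &
      (forall Y : {set X}, Y != @finset.set0 X ->
         (forall y y', y \in Y -> y' \in Y ->
            exists2 A, A \in C & (y \in A) && (y' \in A)) ->
         exists2 A, A \in C & Y \subset A)].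

Definition cliq_le (C C' : {set {set X}}) : Prop :=
  forall A, A \in C -> exists2 B, B \in C' & A \subset B.

(* Condition (3): for a strictly increasing finite list
   a_1 < ... < a_n, C is constant on each piece (-oo,a_1), [a_i,a_{i+1}),
   [a_n,+oo), i.e. C t = C t' whenever t, t' lie above the same a_i's. *)
Definition is_cliquegram (C : R -> {set {set X}}) : Prop :=
  [/\ (forall t, is_cliqueset (C t)),
      (forall t s, t <= s -> cliq_le (C t) (C s)),
      (exists t0 t1 : R, forall t,
          (t0 <= t -> C t = finset.set1 (finset.setTfor X)) /\ (t <= t1 -> C t = (finset.set0 : {set {set X}}))) &
      (exists s : seq R, sorted <%R s /\
          forall t t', (forall a, a \in s -> (a <= t) = (a <= t')) -> C t = C t')].

(* The graph G_t of a network: K is a (nonempty) clique of G_t. *)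
Definition clique_at (N : X -> X -> R) (t : R) (K : {set X}) : bool :=
  [&& K != @finset.set0 X,
      [forall x in K, N x x <= t] &
      [forall x in K, forall y in K, (x != y) ==> (N x y <= t)]].

Definition max_clique_at (N : X -> X -> R) (t : R) (K : {set X}) : bool :=
  clique_at N t K &&
  [forall L : {set X}, (clique_at N t L && (K \subset L)) ==> (L == K)].

Definition Phi (N : X -> X -> R) (t : R) : {set {set X}} :=
  [set K | max_clique_at N t K].

Definition together_times (C : R -> {set {set X}}) (x x' : X) : set R :=
  [set t | exists2 A, A \in C t & (x \in A) && (x' \in A)].

(* Psi(C)(x,x') = min of that set (defined as its infimum; that the
   infimum is attained is part of the theorem). *)
Definition Psi (C : R -> {set {set X}}) (x x' : X) : R :=
  inf (together_times C x x').

End Defs.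

(* Main.v *)
Require Import Defs.
From HB Require Import structures.
From mathcomp Require Import all_boot all_order all_algebra.
From mathcomp Require Import boolp classical_sets reals.
Import Order.TTheory GRing.Theory Num.Theory.
Local Open Scope ring_scope.
Set Implicit Arguments. Unset Strict Implicit. Unset Printing Implicit Defensive.

Section Aux.
Variable R : realType.

Lemma inf_memP (S : set R) (l : R) : (exists t, S t) -> (forall t, S t -> l <= t) ->
  (forall t, S t -> inf S <= t).
Proof. move=> ne lb t St; apply: (ge_inf _ St); exists l => y Sy; exact: lb. Qed.

Lemma inf_ltP (S : set R) b : (exists t, S t) -> inf S < b -> exists2 t, S t & t < b.
Proof. by move=> [t St]; apply: inf_lt; exists t. Qed.

Lemma inf_attained (S : set R) a : S a -> (forall t, S t -> a <= t) -> inf S = a.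
Proof.
move=> Sa lb; apply/le_anti/andP; split.
  by apply: (inf_memP (l:=a)) => //; exists a.
by apply: lb_le_inf; [exists a | move=> y Sy; exact: lb].
Qed.
End Aux.
Section Net.
Variables (R : realType) (X : finType) (N : X -> X -> R).
Implicit Types (K L : {set X}) (t s : R) (x y : X).

Lemma clique_pair t K x y : clique_at N t K -> x \in K -> y \in K -> N x y <= t.
Proof.
case/and3P=> _ /forall_inP hv /forall_inP he xK yK.
case: (eqVneq x y) => [<-|nxy]; first exact: hv.
by move: (he x xK) => /forall_inP /(_ y yK) /implyP; apply.
Qed.

Lemma cliqueP t K : K != finset.set0 -> (forall x y, x \in K -> y \in K -> N x y <= t) ->
  clique_at N t K.
Proof.
move=> K0 h; apply/and3P; split => //.
  by apply/forall_inP => x xK; apply: h.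
by apply/forall_inP => x xK; apply/forall_inP => y yK; apply/implyP => _; apply: h.
Qed.

Lemma clique_mono t s K : t <= s -> clique_at N t K -> clique_at N s K.
Proof.
move=> ts c; apply: cliqueP; first by case/and3P: c.
by move=> x y xK yK; apply: le_trans ts; apply: clique_pair c xK yK.
Qed.

Lemma max_clique_eq t K L : max_clique_at N t K -> clique_at N t L -> K \subset L -> L = K.
Proof.
by case/andP=> _ /forallP h cL KL; move: (h L); rewrite cL KL /= => /eqP.
Qed.

Lemma ext_max t K : clique_at N t K -> exists2 L, max_clique_at N t L & K \subset L.
Proof.
move=> cK.
have PK : clique_at N t K && (K \subset K) by rewrite cK subxx.
case: (@arg_maxnP _ K (fun L => clique_at N t L && (K \subset L)) (fun L => #|L|) PK) => L /andP[cL KL] hmax.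
exists L => //; apply/andP; split => //; apply/forallP => L'; apply/implyP.
case/andP=> cL' LL'; rewrite eq_sym eqEcard LL' /=.
by apply: hmax; rewrite cL' (fintype.subset_trans KL LL').
Qed.

Hypothesis hN : is_network N.

Lemma pair_clique t x y : clique_at N t [set x; y] = (N x y <= t).
Proof.
apply/idP/idP => [c|h].
  by apply: clique_pair c _ _; rewrite !inE eqxx ?orbT.
have [hs hm] := hN x y; move: hm; rewrite ge_max => /andP[hx hy].
apply: cliqueP; first by apply/set0Pn; exists x; rewrite !inE eqxx.
move=> a b; rewrite !inE => /orP[]/eqP-> /orP[]/eqP->.
- exact: le_trans hx h.
- exact: h.
- by rewrite -hs.
- exact: le_trans hy h.
Qed.

Lemma together_Phi x y t : together_times (Phi N) x y t <-> N x y <= t.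
Proof.
split.
  by case=> A; rewrite inE => /andP[cA _] /andP[xA yA]; apply: clique_pair cA xA yA.
rewrite -pair_clique => /ext_max[L mL sL]; exists L; first by rewrite inE.
by rewrite !(fintype.subsetP sL) // !inE eqxx ?orbT.
Qed.

Lemma Psi_Phi : Psi (Phi N) = N.
Proof.
apply/funext => x; apply/funext => y; apply: inf_attained.
  by apply/together_Phi.
by move=> t /together_Phi.
Qed.
End Net.
From mathcomp Require Import lra.
Section Net2.
Variables (R : realType) (X : finType).
Implicit Types (K L : {set X}) (t s : R) (x y : X) (N : X -> X -> R).

Lemma Phi_cliqueset N t : is_cliqueset (Phi N t).
Proof.
split.
- by move=> A; rewrite inE => /andP[/and3P[]].
- move=> A B; rewrite !inE => mA /andP[cB _] AB; apply/esym; exact: max_clique_eq mA cB AB.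
- move=> Y Y0 h.
  have cY : clique_at N t Y.
    apply: cliqueP => // x y xY yY; case: (h x y xY yY) => A; rewrite inE => /andP[cA _].
    by case/andP=> xA yA; apply: clique_pair cA xA yA.
  by case: (ext_max cY) => L mL YL; exists L; rewrite ?inE.
Qed.

Lemma Phi_mono N t s : t <= s -> cliq_le (Phi N t) (Phi N s).
Proof.
move=> ts A; rewrite inE => /andP[cA _].
by case: (ext_max (clique_mono ts cA)) => L mL AL; exists L; rewrite ?inE.
Qed.

Definition bnd N := \sum_(p : X * X) `|N p.1 p.2|.

Lemma bnd_ge N x y : `|N x y| <= bnd N.
Proof.
rewrite /bnd (bigD1 (x, y)) //= lerDl; apply: sumr_ge0 => p _; exact: normr_ge0.
Qed.

Lemma Phi_top N t : (0 < #|X|)%N -> bnd N <= t -> Phi N t = finset.set1 (finset.setTfor X).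
Proof.
move=> hX ht.
have cT : clique_at N t [set: X].
  apply: cliqueP; first by rewrite -card_gt0 cardsT.
  move=> x y _ _; apply: le_trans (ler_norm _) _; exact: le_trans (bnd_ge N x y) ht.
apply/setP => K; rewrite !inE; apply/idP/eqP.
  by move=> mK; apply/esym; apply: max_clique_eq mK cT (finset.subsetT K).
move=> ->; apply/andP; split => //; apply/forallP => L; apply/implyP => /andP[_ sL].
by rewrite finset.eqEsubset sL finset.subsetT.
Qed.

Lemma Phi_bot N t : t <= - bnd N - 1 -> Phi N t = finset.set0.
Proof.
move=> ht; apply/setP => K; rewrite !inE; apply/negbTE; apply/negP => /andP[cK _].
case/and3P: (cK) => /set0Pn[x xK] _ _.
have h1 := clique_pair cK xK xK.
have h2 := bnd_ge N x x.
have h3 : - `|N x x| <= N x x by rewrite lerNl -normrN; apply: ler_norm.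
lra.
Qed.
End Net2.
Section Net3.
Variables (R : realType) (X : finType).
Implicit Types (K L : {set X}) (t s : R) (x y : X) (N : X -> X -> R).

Lemma Phi_ext N t t' : (forall x y, (N x y <= t) = (N x y <= t')) -> Phi N t = Phi N t'.
Proof.
move=> H.
have E : forall K, clique_at N t K = clique_at N t' K.
  move=> K; apply/idP/idP => c; apply: cliqueP; try by case/and3P: c.
    by move=> x y xK yK; rewrite -H; apply: clique_pair c xK yK.
  by move=> x y xK yK; rewrite H; apply: clique_pair c xK yK.
apply/setP => K; rewrite !inE /max_clique_at E; congr (_ && _).
by apply: eq_forallb => L; rewrite E.
Qed.

Lemma Phi_gram N : (0 < #|X|)%N -> is_cliquegram (Phi N).
Proof.
move=> hX; split.
- exact: Phi_cliqueset.
- exact: Phi_mono.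
- exists (bnd N), (- bnd N - 1) => t; split; [exact: Phi_top | exact: Phi_bot].
- exists (sort <=%R (undup (map (fun p : X * X => N p.1 p.2) (enum [set: X * X])))).
  split; first by rewrite sort_lt_sorted undup_uniq.
  move=> t t' H; apply: Phi_ext => x y; apply: H.
  by rewrite mem_sort mem_undup; apply: (map_f (fun p : X * X => N p.1 p.2) (x := (x, y))); rewrite mem_enum inE.
Qed.

Lemma Phi_iso N N' : is_network N -> is_network N' ->
  ((forall x x', N' x x' <= N x x') <-> (forall t, cliq_le (Phi N t) (Phi N' t))).
Proof.
move=> hN hN'; split.
  move=> h t A; rewrite inE => /andP[cA _].
  have cA' : clique_at N' t A.
    apply: cliqueP; first by case/and3P: cA.
    by move=> x y xA yA; apply: le_trans (h x y) _; apply: clique_pair cA xA yA.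
  by case: (ext_max cA') => L mL AL; exists L; rewrite ?inE.
move=> h x y.
have c : clique_at N (N x y) [set x; y] by rewrite pair_clique.
case: (ext_max c) => L mL sL.
have : L \in Phi N (N x y) by rewrite inE.
case/h => B; rewrite inE => /andP[cB _] LB.
by apply: clique_pair cB _ _; apply: (fintype.subsetP LB); apply: (fintype.subsetP sL); rewrite !inE eqxx ?orbT.
Qed.
End Net3.
Section Gram.
Variables (R : realType) (X : finType) (C : R -> {set {set X}}).
Implicit Types (K L : {set X}) (t u : R) (x y : X).
Hypothesis hC : is_cliquegram C.

Let T x y := together_times C x y.

Lemma tt_up x y t u : T x y t -> t <= u -> T x y u.
Proof.
case: hC => _ hm _ _ [A AC /andP[xA yA]] tu.
case: (hm t u tu A AC) => B BC AB; exists B => //.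
by rewrite !(fintype.subsetP AB).
Qed.

Lemma tt_top : exists t0, forall x y t, t0 <= t -> T x y t.
Proof.
case: hC => _ _ [t0 [t1 hb]] _; exists t0 => x y t ht.
by exists [set: X]; [rewrite (proj1 (hb t) ht) inE | rewrite !inE].
Qed.

Lemma tt_bot : exists t1, forall x y t, T x y t -> t1 < t.
Proof.
case: hC => _ _ [t0 [t1 hb]] _; exists t1 => x y t [A AC _].
rewrite ltNge; apply/negP => ht; move: AC; by rewrite (proj2 (hb t) ht) inE.
Qed.

Lemma Psi_ge x y t : T x y t -> Psi C x y <= t.
Proof.
case: tt_bot => t1 h1 ht; apply: (inf_memP (l := t1)) => //; first by exists t.
by move=> u hu; apply: ltW; apply: h1 hu.
Qed.

Fixpoint nextb (m : R) (s : seq R) : R :=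
  if s is a :: s' then (if m < a then Num.min a (nextb m s') else nextb m s') else m + 1.

Lemma nextb_gt m s : m < nextb m s.
Proof.
elim: s => [|a s IH] /=; first by rewrite ltrDl.
by case: ifP => // ma; rewrite lt_min ma IH.
Qed.

Lemma nextb_le m s a : a \in s -> m < a -> nextb m s <= a.
Proof.
elim: s => [|b s IH] //=; rewrite inE => /orP[/eqP<-|as'] ma.
  by rewrite ma ge_min lexx.
by case: ifP => _; [rewrite ge_min IH ?orbT | apply: IH].
Qed.

Lemma Psi_mem x y : T x y (Psi C x y).
Proof.
set m := Psi C x y.
case: (hC) => _ _ _ [s [_ hs]].
case: tt_top => t0 h0.
have ne : exists t, T x y t by exists t0; apply: h0.
case: (inf_ltP ne (nextb_gt m s)) => t Tt tb.
have mt : m <= t by apply: Psi_ge.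
have E : C m = C t.
  apply: hs => a aS; apply/idP/idP => ha; first exact: le_trans mt.
  rewrite leNgt; apply/negP => ma.
  by move: (lt_le_trans tb (nextb_le aS ma)); rewrite ltNge ha.
by case: Tt => A; rewrite -E => AC h; exists A.
Qed.

Lemma Psi_leP x y t : Psi C x y <= t <-> T x y t.
Proof.
split; last exact: Psi_ge.
by move=> h; apply: tt_up h; apply: Psi_mem.
Qed.

Lemma Psi_net : is_network (Psi C).
Proof.
move=> x y; split.
  rewrite /Psi /together_times; congr (inf _); apply/seteqP; split => t [A AC h];
  by exists A => //; rewrite andbC.
rewrite ge_max; case: (Psi_mem x y) => A AC /andP[xA yA].
by apply/andP; split; apply/Psi_leP; exists A => //; rewrite ?xA ?yA.
Qed.

Lemma clique_Psi t K : clique_at (Psi C) t K <->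
  K != finset.set0 /\ (forall x y, x \in K -> y \in K -> T x y t).
Proof.
split.
  move=> c; split; first by case/and3P: c.
  by move=> x y xK yK; apply/Psi_leP; apply: clique_pair c xK yK.
case=> K0 h; apply: cliqueP => // x y xK yK; apply/Psi_leP; exact: h.
Qed.

Lemma Phi_Psi : Phi (Psi C) = C.
Proof.
apply/funext => t; case: (hC) => hcs _ _ _; case: (hcs t) => h0 hanti hcl.
have cB : forall B, B \in C t -> clique_at (Psi C) t B.
  move=> B BC; apply/clique_Psi; split; first exact: h0.
  by move=> x y xB yB; exists B => //; rewrite xB yB.
apply/setP => K; rewrite inE; apply/idP/idP.
  move=> mK; have /clique_Psi [K0 hK] : clique_at (Psi C) t K by case/andP: mK.
  case: (hcl K K0 hK) => B BC KB.
  by rewrite -(max_clique_eq mK (cB B BC) KB).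
move=> KC; apply/andP; split; first exact: cB.
apply/forallP => L; apply/implyP => /andP[/clique_Psi [L0 hL] KL].
case: (hcl L L0 hL) => B BC LB.
have KB := hanti K B KC BC (fintype.subset_trans KL LB).
by rewrite finset.eqEsubset KL andbT; rewrite KB.
Qed.
End Gram.

Theorem mainTheorem2 (R : realType) (X : finType) (hX : (0 < #|X|)%N) :
  [/\ (* Phi is well defined *)
      (forall N : X -> X -> R, is_network N -> is_cliquegram (Phi N)),
      (* Psi is well defined: the minimum exists, and Psi C is a network *)
      (forall C : R -> {set {set X}}, is_cliquegram C ->
         (forall x x', together_times C x x' (Psi C x x')) /\ is_network (Psi C)),
      (* mutually inverse *)
      (forall N : X -> X -> R, is_network N -> Psi (Phi N) = N),
      (forall C : R -> {set {set X}}, is_cliquegram C -> Phi (Psi C) = C) &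
      (* poset isomorphism *)
      (forall N N' : X -> X -> R, is_network N -> is_network N' ->
         ((forall x x', N' x x' <= N x x') <->
          (forall t, cliq_le (Phi N t) (Phi N' t))))].
Proof.
split.
- by move=> N _; apply: Phi_gram.
- by move=> C hC; split; [exact: Psi_mem | exact: Psi_net].
- by move=> N hN; apply: Psi_Phi.
- by move=> C hC; apply: Phi_Psi.
- exact: Phi_iso.
Qed.
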